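(* Assume the general coarsening setting described in the context and let $r$ be a deterministic path with $P(R=r)>0$. If CAR(GCMP)-loc holds on $r$, i.e. $$\mathcal{L}^{(\theta,\psi)/(\theta_0,\psi_0)}_{\mathcal{R}|\mathcal{X}}=\mathcal{L}^{(\theta,\psi)/(\theta_0,\psi_0)}_{\mathcal{R}|\mathcal{X}^r}\quad\text{a.s. on }\{R=r\}\ \text{for all }(\theta,\psi),$$ then the mechanism leading to incomplete data is ignorable on $r$: for all $\theta$ and whatever $\psi_0$, $\mathcal{L}^{(\theta,\psi_0)/(\theta_0,\psi_0)}_{\mathcal{O}}=\mathcal{L}^{\theta/\theta_0}_{\mathcal{X}^r}$ a.s. on $\{R=r\}$.
   Context: Setting. On a measurable space $(\Omega,\mathcal{F})$ live two càdlàg stochastic processes: $X=(X_t)_{t\ge0}$ with values in $\mathbb{R}^d$ (path space a Skorohod space) and a response indicator process $R=(R_t)_{t\ge0}$ with values in $\{0,1\}$, $R_t=1$ meaning $X_t$ is observed. Let $\mathcal{X}=\sigma(X_t,t\ge0)$, $\mathcal{R}=\sigma(R_t,t\ge0)$, $\mathcal{F}=\mathcal{X}\vee\mathcal{R}$. A model is a family $\{P_{(\theta,\psi)}:(\theta,\psi)\in\Theta\times\Psi\}$ of mutually equivalent probability measures on $\mathcal{F}$ with reference measure $P_{(\theta_0,\psi_0)}$; the restriction of $P_{(\theta,\psi)}$ to $\mathcal{X}$ depends only on $\theta$ (denoted $P_\theta$). Non-informativeness: $P_{(\theta_1,\psi)}(A\mid\mathcal{X})=P_{(\theta_2,\psi)}(A\mid\mathcal{X})$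 a.s. for all $A\in\mathcal{R}$. For a sub-$\sigma$-field $\mathcal{G}$, $\mathcal{L}^{(\theta,\psi)/(\theta_0,\psi_0)}_{\mathcal{G}}$ is the Radon–Nikodym derivative $dP_{(\theta,\psi)}/dP_{(\theta_0,\psi_0)}$ restricted to $\mathcal{G}$; for $\mathcal{G}\subset\mathcal{X}$ it is written $\mathcal{L}^{\theta/\theta_0}_{\mathcal{G}}$. The conditional likelihood ratio is $\mathcal{L}_{\mathcal{Y}|\mathcal{G}}=\mathcal{L}_{\mathcal{G}\vee\mathcal{Y}}/\mathcal{L}_{\mathcal{G}}$. The observed $\sigma$-field is $\mathcal{O}=\sigma(R_tX_t,R_t,\ t\ge0)$. For a deterministic path $r$, $\{R=r\}=\{R_t=r_t\ \forall t\}$ and $\mathcal{X}^r=\sigma(r_tX_t,\ t\ge0)$. *)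

(* Defs.v *)
From HB Require Import structures.
From mathcomp Require Import all_boot all_order all_algebra.
From mathcomp Require Import all_classical all_reals all_analysis.
Set Implicit Arguments. Unset Strict Implicit. Unset Printing Implicit Defensive.
Import Order.TTheory GRing.Theory Num.Theory numFieldNormedType.Exports.
Local Open Scope classical_set_scope.
Local Open Scope ring_scope.

Section Defs.
Context {d : measure_display} {Omega : measurableType d} {R : realType}.

Definition cadlag (f : R -> R) : Prop :=
  (forall t : R, 0 <= t -> f x @[x --> t^'+] --> f t) /\
  (forall t : R, 0 < t -> cvg (f x @[x --> t^'-])).

Definition gen_by (I : Type) (C : set I) (f : I -> Omega -> R) : set (set Omega) :=
  [set A | exists2 i, C i & exists2 B : set R, measurable B & A = f i @^-1` B].

(* index set {(t, j) | t >= 0, j < n} for coordinates of an R^n-valued process *)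
Definition idx (n : nat) : set (R * 'I_n) := [set p | 0 <= p.1].

Definition join (G H : set (set Omega)) : set (set Omega) := <<s G `|` H >>.

Definition sigmaX (n : nat) (X : R -> Omega -> 'rV[R]_n) : set (set Omega) :=
  <<s gen_by (@idx n) (fun p w => X p.1 w ord0 p.2) >>.

Definition sigmaR (Rp : R -> Omega -> R) : set (set Omega) :=
  <<s gen_by [set t : R | 0 <= t] Rp >>.

Definition sigmaXr (n : nat) (r : R -> R) (X : R -> Omega -> 'rV[R]_n)
  : set (set Omega) :=
  <<s gen_by (@idx n) (fun p w => r p.1 * X p.1 w ord0 p.2) >>.

Definition sigmaO (n : nat) (X : R -> Omega -> 'rV[R]_n) (Rp : R -> Omega -> R)
  : set (set Omega) :=
  <<s gen_by (@idx n) (fun p w => Rp p.1 w * X p.1 w ord0 p.2)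
      `|` gen_by [set t : R | 0 <= t] Rp >>.

Definition eventR (Rp : R -> Omega -> R) (r : R -> R) : set Omega :=
  [set w | forall t, 0 <= t -> Rp t w = r t].

Definition G_measurable (G : set (set Omega)) (f : Omega -> R) : Prop :=
  forall B : set R, measurable B -> G (f @^-1` B).

Definition is_LR (G : set (set Omega)) (mu nu : probability Omega R)
  (L : Omega -> R) : Prop :=
  [/\ G_measurable G L, (forall w, 0 <= L w) &
      forall A, G A -> mu A = (\int[nu]_(w in A) (L w)%:E)%E].

Definition is_condprob (G : set (set Omega)) (mu : probability Omega R)
  (A : set Omega) (g : Omega -> R) : Prop :=
  [/\ G_measurable G g, (forall w, 0 <= g w) &
      forall B, G B -> mu (A `&` B) = (\int[mu]_(w in B) (g w)%:E)%E].

Definition ae_on (mu : probability Omega R) (S : set Omega) (f g : Omega -> R) : Prop :=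
  {ae mu, forall w, S w -> f w = g w}.

End Defs.

(* Main.v *)
Require Import Defs.
From HB Require Import structures.
From mathcomp Require Import all_boot all_order all_algebra.
From mathcomp Require Import all_classical all_reals all_analysis.
From mathcomp Require Import measurable_realfun.
Import Order.TTheory GRing.Theory Num.Theory numFieldNormedType.Exports.
Local Open Scope classical_set_scope.
Local Open Scope ring_scope.

Module Helpers.
Set Implicit Arguments. Unset Strict Implicit. Unset Printing Implicit Defensive.
Section generic.
Context d (T : measurableType d) (R : realType).
Local Open Scope ereal_scope.

Lemma change_dens (nu nu0 : {finite_measure set T -> \bar R}) (m : T -> R) :
  measurable_fun setT m -> (forall x, (0 <= m x)%R) ->
  (forall A, measurable A -> nu A = \int[nu0]_(x in A) (m x)%:E) ->
  forall h : T -> R, measurable_fun setT h -> (forall x, (0 <= h x)%R) ->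
  forall A, measurable A ->
  \int[nu]_(x in A) (h x)%:E = \int[nu0]_(x in A) (h x * m x)%:E.
Proof.
move=> mm m0 hm h mh h0 A mA.
have numu : nu `<< nu0.
  apply/null_content_dominatesP => B mB nB.
  by rewrite hm// null_set_integral//; apply/measurable_EFinP; exact: measurable_funTS.
set f := Radon_Nikodym_SigmaFinite.f nu nu0.
have ae : ae_eq nu0 A f (EFin \o m).
  apply: integral_ae_eq => //.
  - apply: (integrableS measurableT) => //.
    exact: Radon_Nikodym_SigmaFinite.f_integrable.
  - by apply/measurable_EFinP; exact: measurable_funTS.
  - move=> E EA mE; rewrite -Radon_Nikodym_SigmaFinite.f_integral//.
    by rewrite hm.
rewrite -(Radon_Nikodym_SigmaFinite.change_of_variables numu)//; last first.
  by apply/measurable_EFinP; exact: measurable_funTS.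
apply: ae_eq_integral => //.
- apply: emeasurable_funM; first by apply/measurable_EFinP; exact: measurable_funTS.
  apply: measurable_funTS.
  exact: measurable_int (Radon_Nikodym_SigmaFinite.f_integrable numu).
- by apply/measurable_EFinP; apply: measurable_funTS; exact: measurable_funM.
- move: ae; apply: filterS => x fx Ax.
  by have := fx Ax; rewrite /f => ->; rewrite EFinM.
Qed.

End generic.
Lemma ae_transfer d (T : measurableType d) (R : realType)
  (mu nu : {measure set T -> \bar R}) (P : T -> Prop) :
  (forall N, measurable N -> nu N = 0%E -> mu N = 0%E) ->
  {ae nu, forall x, P x} -> {ae mu, forall x, P x}.
Proof.
move=> h [N [mN N0 sN]]; exists N; split => //; exact: h.
Qed.

Definition gres d (T : measurableType d) (R : realType) (G : set (set T))
  (hG : G `<=` measurable) (m : set T -> \bar R) : set (g_sigma_algebraType G) -> \bar R :=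
  fun A => m A.

Section gres.
Context d (T : measurableType d) (R : realType) (G : set (set T)).
Variable hG : G `<=` measurable.

Lemma sGm : <<s G >> `<=` measurable.
Proof. exact: (smallest_sub (@sigma_algebra_measurable _ T) hG). Qed.


Section inst.
Variable m : {finite_measure set T -> \bar R}.
Let gres0 : gres hG m set0 = 0%E. Proof. exact: measure0. Qed.
Let gres_ge0 A : (0 <= gres hG m A)%E. Proof. exact: measure_ge0. Qed.
Let gres_sa : semi_sigma_additive (gres hG m).
Proof.
move=> F mF tF mUF; apply: measure_semi_sigma_additive => //.
- by move=> n; apply: sGm; exact: mF.
- by apply: sGm; exact: mUF.
Qed.
HB.instance Definition _ := isMeasure.Build _ _ _ (gres hG m) gres0 gres_ge0 gres_sa.
Let gres_fin : fin_num_fun (gres hG m).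
Proof. by move=> A mA; apply: fin_num_measure; apply: sGm. Qed.
HB.instance Definition _ := Measure_isFinite.Build _ _ _ (gres hG m) gres_fin.
End inst.

Lemma mid : measurable_fun setT (id : T -> g_sigma_algebraType G).
Proof. by move=> _ B mB; rewrite setTI; apply: sGm. Qed.

Lemma gres_integral (m : {finite_measure set T -> \bar R}) (A : set T)
  (f : g_sigma_algebraType G -> \bar R) :
  <<s G >> A -> measurable_fun setT f -> (forall x, (0 <= f x)%E) ->
  (\int[gres hG m]_(x in A) f x = \int[m]_(x in A) f x)%E.
Proof.
move=> mA mf f0.
have -> : gres hG m = pushforward m (id : T -> g_sigma_algebraType G) by [].
rewrite (@ge0_integral_pushforward _ _ T (g_sigma_algebraType G) R id mid m A f) //;
  try exact: measurable_funTS; by move=> y _; exact: f0.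
Qed.

Lemma gres_ae (m : {finite_measure set T -> \bar R}) (P : T -> Prop) :
  {ae gres hG m, forall x : g_sigma_algebraType G, P x} -> {ae m, forall x, P x}.
Proof.
move=> [N [mN N0 sN]]; exists N; split => //; exact: sGm.
Qed.

End gres.

Section omega.
Context d (Omega : measurableType d) (R : realType) (G : set (set Omega)).
Hypothesis hG : G `<=` measurable.
Local Notation TG := (g_sigma_algebraType G).

Lemma GmP (f : Omega -> R) :
  G_measurable <<s G >> f <-> measurable_fun setT (f : TG -> R).
Proof.
split => [h _ B mB|h B mB]; first by rewrite setTI; exact: h.
by have := h measurableT B mB; rewrite setTI.
Qed.

Lemma GmEP (f : Omega -> R) :
  G_measurable <<s G >> f -> measurable_fun setT (fun x : TG => (f x)%:E).
Proof. by move=> /GmP h; apply/measurable_EFinP. Qed.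

Lemma LR_change (nu nu0 : {finite_measure set Omega -> \bar R}) (m : Omega -> R) :
  G_measurable <<s G >> m -> (forall x, 0 <= m x) ->
  (forall A, <<s G >> A -> nu A = (\int[nu0]_(x in A) (m x)%:E)%E) ->
  forall h : Omega -> R, G_measurable <<s G >> h -> (forall x, 0 <= h x) ->
  forall A, <<s G >> A ->
  (\int[nu]_(x in A) (h x)%:E = \int[nu0]_(x in A) (h x * m x)%:E)%E.
Proof.
move=> mm m0 hm h mh h0 A mA.
rewrite -(gres_integral hG) //; last by apply: GmEP.
rewrite -(gres_integral hG) //; last first.
  by move=> x; rewrite lee_fin mulr_ge0.
  apply/measurable_EFinP; apply: measurable_funM; exact/GmP.
apply: (@change_dens _ TG R (gres hG nu) (gres hG nu0) m) => //.
- exact/GmP.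
- by move=> B mB; rewrite /gres hm// gres_integral//; exact: GmEP.
- exact/GmP.
Qed.

Lemma LR_indep (nu nu' : {finite_measure set Omega -> \bar R}) :
  (forall A, <<s G >> A -> nu A = nu' A) ->
  forall h : Omega -> R, G_measurable <<s G >> h -> (forall x, 0 <= h x) ->
  forall A, <<s G >> A ->
  (\int[nu]_(x in A) (h x)%:E = \int[nu']_(x in A) (h x)%:E)%E.
Proof.
move=> e h mh h0 A mA.
rewrite -(gres_integral hG) //; last by apply: GmEP.
rewrite -(gres_integral hG) //; last by apply: GmEP.
apply: eq_measure_integral => B mB _; exact: e.
Qed.

Lemma LR_unique_on (nu : {finite_measure set Omega -> \bar R}) (D : set Omega)
  (f g : Omega -> R) : <<s G >> D ->
  G_measurable <<s G >> f -> G_measurable <<s G >> g ->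
  (forall x, 0 <= f x) -> (forall x, 0 <= g x) ->
  (\int[nu]_(x in D) (f x)%:E < +oo)%E ->
  (forall A, <<s G >> A -> A `<=` D ->
     \int[nu]_(x in A) (f x)%:E = \int[nu]_(x in A) (g x)%:E)%E ->
  {ae nu, forall x, D x -> f x = g x}.
Proof.
move=> mD mf mg f0 g0 fin e.
have : ae_eq (gres hG nu) (D : set TG) (fun x => (f x)%:E) (fun x => (g x)%:E).
  apply: integral_ae_eq => //.
  - apply/integrableP; split; first by apply: measurable_funTS; exact: GmEP.
    under eq_integral do rewrite gee0_abs ?lee_fin//.
    by rewrite gres_integral//; exact: GmEP.
  - by apply: measurable_funTS; exact: GmEP.
  - move=> E ED mE; rewrite !gres_integral//; try exact: GmEP.
    exact: e.
move/gres_ae => [N [mN N0 sN]]; exists N; split => // x /= nx; apply: sN => /= hx.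
by apply: nx => Dx; case: (hx Dx).
Qed.

End omega.

Definition dens d (T : measurableType d) (R : realType) (nu : {measure set T -> \bar R})
  (f : T -> R) (mf : measurable_fun setT f) (f0 : forall x, (0 <= f x)%R)
  (fi : (\int[nu]_x (f x)%:E < +oo)%E) : set T -> \bar R :=
  fun A => (\int[nu]_(x in A) (f x)%:E)%E.

Section dens_inst.
Context d (T : measurableType d) (R : realType).
Variables (nu : {finite_measure set T -> \bar R}) (f : T -> R)
  (mf : measurable_fun setT f) (f0 : forall x, (0 <= f x)%R)
  (fi : (\int[nu]_x (f x)%:E < +oo)%E).
Local Open Scope ereal_scope.
Local Notation dn := (dens mf f0 fi).
Let dens0 : dn set0 = 0. Proof. exact: integral_set0. Qed.
Let dens_ge0 A : 0 <= dn A.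
Proof. by apply: integral_ge0 => x _; rewrite lee_fin. Qed.
Let dens_sa : semi_sigma_additive dn.
Proof.
apply: semi_sigma_additive_nng_induced; first exact/measurable_EFinP.
by move=> x; rewrite lee_fin.
Qed.
HB.instance Definition _ := isMeasure.Build _ _ _ dn dens0 dens_ge0 dens_sa.
Let dens_fin : fin_num_fun dn.
Proof.
move=> A mA; rewrite ge0_fin_numE ?dens_ge0//; apply: le_lt_trans fi.
apply: ge0_subset_integral => //; first exact/measurable_EFinP.
by move=> x _; rewrite lee_fin.
Qed.
HB.instance Definition _ := Measure_isFinite.Build _ _ _ dn dens_fin.

End dens_inst.

Section dens_lemma.
Context d (T : measurableType d) (R : realType).
Variables (nu : {finite_measure set T -> \bar R}) (f : T -> R)
  (mf : measurable_fun setT f) (f0 : forall x, (0 <= f x)%R)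
  (fi : (\int[nu]_x (f x)%:E < +oo)%E).
Local Open Scope ereal_scope.
Lemma dens_change (h : T -> R) : measurable_fun setT h -> (forall x, (0 <= h x)%R) ->
  forall A, measurable A ->
  \int[dens mf f0 fi]_(x in A) (h x)%:E = \int[nu]_(x in A) (h x * f x)%:E.
Proof.
move=> mh h0 A mA.
apply: (@change_dens _ T R (dens mf f0 fi) nu f) => //.
Qed.
End dens_lemma.

Section sigma_facts.
Context d (T : measurableType d).

Lemma sigma_mono (G H : set (set T)) : G `<=` <<s H >> -> <<s G >> `<=` <<s H >>.
Proof. move=> GH; apply: smallest_sub => //; exact: smallest_sigma_algebra. Qed.

Lemma sigmaI (G : set (set T)) A B : <<s G >> A -> <<s G >> B -> <<s G >> (A `&` B).
Proof.
move=> hA hB; exact: (@measurableI _ (g_sigma_algebraType G) A B hA hB).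
Qed.

Lemma sigmaT (G : set (set T)) : <<s G >> setT.
Proof. exact: (@measurableT _ (g_sigma_algebraType G)). Qed.

Lemma trace_sub (G H : set (set T)) (E : set T) : <<s H >> E ->
  (forall A, G A -> <<s H >> (A `&` E)) ->
  forall A, <<s G >> A -> <<s H >> (A `&` E).
Proof.
move=> mE hGH; apply: (@smallest_sub _ _ _ [set A | <<s H >> (A `&` E)]) => //.
split => /=.
- by rewrite set0I; exact: (@measurable0 _ (g_sigma_algebraType H)).
- move=> A hA; rewrite setTD.
  have -> : ~` A `&` E = E `\` (A `&` E).
    by apply/seteqP; split => x /=; [case=> nA Ex; split => // -[]|case=> Ex nAE; split => // Ax; apply: nAE].
  exact: (@measurableD _ (g_sigma_algebraType H)).
- move=> F hF; rewrite setI_bigcupl.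
  exact: (@bigcupT_measurable _ (g_sigma_algebraType H)).
Qed.
End sigma_facts.

Section eventR_meas.
Context d (Omega : measurableType d) (R : realType).

Lemma right_seq (t : R) : 0 <= t -> exists u : nat -> nat,
  (forall n, t < (u n)%:R / n.+1%:R) /\ (fun n => (u n)%:R / n.+1%:R) @ \oo --> t.
Proof.
move=> t0; exists (fun n => (Num.truncn (t * n.+1%:R)).+1); split.
  move=> n; have := truncn_itv (mulr_ge0 t0 (ler0n _ n.+1)) => /andP[_ h].
  by rewrite ltr_pdivlMr// ?ltr0Sn.
apply: (@squeeze_cvgr _ _ _ _ (fun _ => t) (fun n => t + n.+1%:R^-1)).
- near=> n; have := truncn_itv (mulr_ge0 t0 (ler0n _ n.+1)) => /andP[h1 h2].
  apply/andP; split.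
    by rewrite ler_pdivlMr ?ltr0Sn// ltW.
  rewrite ler_pdivrMr ?ltr0Sn// mulrDl mulVf ?pnatr_eq0//.
  by rewrite -natr1 lerD2r.
- exact: cvg_cst.
- rewrite -[X in _ --> X]addr0; apply: cvgD; first exact: cvg_cst.
  exact: cvg_harmonic.
Unshelve. all: by end_near.
Qed.

Lemma eventR_sigmaR (Rp : R -> Omega -> R) (r : R -> R) :
  (forall w, cadlag (fun t => Rp t w)) -> cadlag r ->
  sigmaR Rp (eventR Rp r).
Proof.
move=> cR cr.
have -> : eventR Rp r = \bigcap_n \bigcap_k
    [set w | Rp (k%:R / n.+1%:R) w = r (k%:R / n.+1%:R)].
  apply/seteqP; split => w /=.
    by move=> h n _ k _; apply: h; rewrite divr_ge0.
  move=> h t t0; have [u [ut uc]] := right_seq t0.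
  have e n : Rp ((u n)%:R / n.+1%:R) w = r ((u n)%:R / n.+1%:R) by exact: h.
  have c1 := (proj1 (cvg_at_rightP _ _ _) ((cR w).1 t t0)) _ (conj ut uc).
  have c2 := (proj1 (cvg_at_rightP _ _ _) (cr.1 t t0)) _ (conj ut uc).
  move: c1; rewrite (_ : (fun n => Rp ((u n)%:R / n.+1%:R) w) = (fun n => r ((u n)%:R / n.+1%:R))); last first.
    by apply/funext => n; exact: e.
  move=> c1; exact: (cvg_unique _ c1 c2).
apply: (@bigcapT_measurable _ (g_sigma_algebraType _)) => n.
apply: (@bigcapT_measurable _ (g_sigma_algebraType _)) => k.
apply: sub_sigma_algebra; exists (k%:R / n.+1%:R); first by rewrite /= divr_ge0.
exists [set r (k%:R / n.+1%:R)]; first exact: measurable_set1.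
by [].
Qed.
End eventR_meas.

Section helpers.
Context d (Omega : measurableType d) (R : realType).

Lemma ae_mp (m : {measure set Omega -> \bar R}) (P Q : Omega -> Prop) :
  {ae m, forall x, P x} -> (forall x, P x -> Q x) -> {ae m, forall x, Q x}.
Proof.
move=> [N [mN N0 sN]] h; exists N; split => // x /= nQ; apply: sN => /= Px.
exact: nQ (h x Px).
Qed.

Lemma ae_and (m : {measure set Omega -> \bar R}) (P Q : Omega -> Prop) :
  {ae m, forall x, P x} -> {ae m, forall x, Q x} -> {ae m, forall x, P x /\ Q x}.
Proof.
move=> [N [mN N0 sN]] [M [mM M0 sM]]; exists (N `|` M); split => //.
- exact: measurableU.
- by rewrite measureU0.
move=> x /= nPQ; have [Px|nPx] := pselect (P x); last by left; apply: sN.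
by right; apply: sM => /= Qx; apply: nPQ.
Qed.

Lemma Gm_mono (G H : set (set Omega)) (f : Omega -> R) :
  G `<=` H -> G_measurable G f -> G_measurable H f.
Proof. by move=> GH h B mB; apply: GH; exact: h. Qed.

Lemma Gm_mul (G : set (set Omega)) (f g : Omega -> R) :
  G_measurable <<s G >> f -> G_measurable <<s G >> g ->
  G_measurable <<s G >> (fun w => f w * g w).
Proof.
move=> /GmP hf /GmP hg; apply/GmP.
exact: (@measurable_funM _ (g_sigma_algebraType G) R setT f g).
Qed.

Lemma Gm_cst (G : set (set Omega)) (c : R) :
  G_measurable <<s G >> (fun _ => c).
Proof. apply/GmP; exact: measurable_cst. Qed.

Lemma Gm_meas (G : set (set Omega)) (f : Omega -> R) :
  G `<=` measurable -> G_measurable <<s G >> f -> measurable_fun setT f.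
Proof.
move=> hG h _ B mB; rewrite setTI; apply: (sGm hG); exact: h.
Qed.

End helpers.

Section helpers2.
Context d (Omega : measurableType d) (R : realType).
Local Open Scope ereal_scope.

Lemma prob_lty (m : probability Omega R) A : measurable A -> m A < +oo.
Proof.
by move=> mA; apply: (le_lt_trans (probability_le1 m mA)); exact: ltry.
Qed.

Lemma int_one (m : {measure set Omega -> \bar R}) A : measurable A ->
  \int[m]_(x in A) ((fun _ : Omega => 1%R) x)%:E = m A.
Proof. by move=> mA; rewrite integral_cst// mul1e. Qed.

Lemma LR_pos (G : set (set Omega)) (hG : G `<=` measurable) (mu nu : probability Omega R)
  (L : Omega -> R) :
  (forall N, measurable N -> mu N = 0 -> nu N = 0) -> is_LR <<s G >> mu nu L ->
  {ae nu, forall w, L w != 0%R}.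
Proof.
move=> eq [mL Lp hL].
have hN : <<s G >> (L @^-1` [set 0%R]) by apply: mL; exact: measurable_set1.
exists (L @^-1` [set 0%R]); split.
- exact: (sGm hG).
- apply: eq; first exact: (sGm hG).
  by rewrite hL// integral0_eq// => x /= ->.
- by move=> x /= /negP; rewrite negbK => /eqP.
Qed.

Lemma LR_one (G : set (set Omega)) (hG : G `<=` measurable) (mu nu : probability Omega R)
  (L : Omega -> R) :
  (forall A, <<s G >> A -> mu A = nu A) -> is_LR <<s G >> mu nu L ->
  {ae nu, forall w, L w = 1%R}.
Proof.
move=> eq [mL Lp hL].
have fin : \int[nu]_(x in setT) (L x)%:E < +oo.
  by rewrite -hL; [exact: prob_lty|exact: (@sigmaT _ _ G)].
have h := @LR_unique_on d Omega R G hG nu setT L (fun _ => 1%R) (@sigmaT _ _ G) mL (Gm_cst 1%R)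
  Lp (fun _ => ler01) fin.
apply: ae_mp; first apply: h.
- move=> A hA _; rewrite -hL// eq// int_one//; exact: (sGm hG).
- by move=> x; apply.
Qed.

End helpers2.

End Helpers.
Import Helpers.

Theorem theorem4 (d : measure_display) (Omega : measurableType d) (R : realType)
  (n : nat) (X : R -> Omega -> 'rV[R]_n) (Rp : R -> Omega -> R)
  (Theta Psi : Type) (P : Theta -> Psi -> probability Omega R)
  (theta0 : Theta) (psi0 : Psi) (r : R -> R) :
  (forall (w : Omega) (j : 'I_n), cadlag (fun t => X t w ord0 j)) ->
  (forall w : Omega, cadlag (fun t => Rp t w)) ->
  (forall t (w : Omega), 0 <= t -> Rp t w = 0 \/ Rp t w = 1) ->
  (@measurable d Omega) = join (sigmaX X) (sigmaR Rp) ->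
  (forall th ps th' ps' (A : set Omega), measurable A ->
     (P th ps A = 0%E <-> P th' ps' A = 0%E)) ->
  (forall th ps ps' (A : set Omega), sigmaX X A -> P th ps A = P th ps' A) ->
  (forall th1 th2 ps (A : set Omega), sigmaR Rp A ->
     exists g1 g2 : Omega -> R,
       [/\ is_condprob (sigmaX X) (P th1 ps) A g1,
           is_condprob (sigmaX X) (P th2 ps) A g2 &
           {ae P theta0 psi0, forall w, g1 w = g2 w}]) ->
  cadlag r -> (forall t, 0 <= t -> r t = 0 \/ r t = 1) ->
  (0 < P theta0 psi0 (eventR Rp r))%E ->
  (forall th ps, exists L1 L2 L3 L4 : Omega -> R,
     [/\ is_LR (join (sigmaX X) (sigmaR Rp)) (P th ps) (P theta0 psi0) L1,
         is_LR (sigmaX X) (P th ps) (P theta0 psi0) L2,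
         is_LR (join (sigmaXr r X) (sigmaR Rp)) (P th ps) (P theta0 psi0) L3,
         is_LR (sigmaXr r X) (P th ps) (P theta0 psi0) L4 &
         ae_on (P theta0 psi0) (eventR Rp r)
           (fun w => L1 w / L2 w) (fun w => L3 w / L4 w)]) ->
  forall (th : Theta) (ps : Psi) (LO LXr : Omega -> R),
    is_LR (sigmaO X Rp) (P th ps) (P theta0 ps) LO ->
    is_LR (sigmaXr r X) (P th ps) (P theta0 ps) LXr ->
    ae_on (P theta0 psi0) (eventR Rp r) LO LXr.
Proof.
move=> cX cR R01 hF equiv marg NI cr r01 PE CAR th ps LO LXr hLO hLXr.
pose genX := @gen_by d Omega R _ (@idx R n) (fun p w => X p.1 w ord0 p.2).
pose genXr := @gen_by d Omega R _ (@idx R n) (fun p w => r p.1 * X p.1 w ord0 p.2).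
pose genR := @gen_by d Omega R _ [set t : R | 0 <= t] Rp.
pose genO := @gen_by d Omega R _ (@idx R n) (fun p w => Rp p.1 w * X p.1 w ord0 p.2) `|` genR.
pose SX := <<s genX >>. pose SR := <<s genR >>. pose SXr := <<s genXr >>.
pose SO := <<s genO >>.
pose GF := SX `|` SR. pose GJ := SXr `|` SR.
pose E := eventR Rp r.
have hmF : forall A, measurable A <-> <<s GF >> A by move=> A; rewrite hF.
have hSX : SX `<=` measurable by move=> A hA; apply/hmF; apply: sub_sigma_algebra; left.
have hSR : SR `<=` measurable by move=> A hA; apply/hmF; apply: sub_sigma_algebra; right.
have hGF : GF `<=` measurable by move=> A [] ?; [exact: hSX|exact: hSR].
have hgX : genX `<=` measurable by move=> A hA; apply: hSX; exact: sub_sigma_algebra.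
have hgR : genR `<=` measurable by move=> A hA; apply: hSR; exact: sub_sigma_algebra.
have hgXr : genXr `<=` SX.
  move=> A [p hp [B mB ->]]; apply: sub_sigma_algebra; exists p => //.
  exists (( *%R (r p.1)) @^-1` B) => //.
  by have := @mulrl_measurable _ setT (r p.1) measurableT _ mB; rewrite setTI.
have hSXrX : SXr `<=` SX by exact: sigma_mono.
have hgXrm : genXr `<=` measurable by move=> A /hgXr; exact: hSX.
have hGJ : GJ `<=` measurable by move=> A [] ?; [apply: hSX; exact: hSXrX|exact: hSR].
have hgO : genO `<=` measurable.
  move=> A [[p hp [B mB ->]]|]; last exact: hgR.
  have mR : measurable_fun setT (Rp p.1).
    move=> _ C mC; rewrite setTI; apply: hgR; exists p.1 => //; by exists C.
  have mX : measurable_fun setT (fun w => X p.1 w ord0 p.2).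
    move=> _ C mC; rewrite setTI; apply: hgX; exists p => //; by exists C.
  by have := measurable_funM mR mX measurableT mB; rewrite setTI.
have hER : SR E by exact: eventR_sigmaR.
have hEO : SO E.
  by apply: (sigma_mono (G := genR)) => // A hA; apply: sub_sigma_algebra; right.
have hEJ : <<s GJ >> E by apply: sub_sigma_algebra; right.
have hEm : measurable E by exact: hSR.
have T1 : forall A, SO A -> <<s GJ >> (A `&` E).
  apply: trace_sub => // A [[p hp [B mB ->]]|hA]; last first.
    apply: sigmaI => //; apply: sub_sigma_algebra; right; exact: sub_sigma_algebra.
  have -> : (fun w => Rp p.1 w * X p.1 w ord0 p.2) @^-1` B `&` E =
      (fun w => r p.1 * X p.1 w ord0 p.2) @^-1` B `&` E.
    by apply/seteqP; split => w [h1 h2]; split => //=; move: h1 => /=;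
      rewrite (h2 _ hp).
  apply: sigmaI => //; apply: sub_sigma_algebra; left; apply: sub_sigma_algebra.
  by exists p => //; exists B.
have T2 : forall A, SXr A -> SO (A `&` E).
  apply: trace_sub => // A [p hp [B mB ->]].
  have -> : (fun w => r p.1 * X p.1 w ord0 p.2) @^-1` B `&` E =
      (fun w => Rp p.1 w * X p.1 w ord0 p.2) @^-1` B `&` E.
    by apply/seteqP; split => w [h1 h2]; split => //=; move: h1 => /=;
      rewrite (h2 _ hp).
  apply: sigmaI => //; apply: sub_sigma_algebra; left.
  by exists p => //; exists B.
have eqv : forall a b a' b' N, measurable N -> P a b N = 0%E -> P a' b' N = 0%E.
  by move=> a b a' b' N mN; case: (equiv a b a' b' N mN).
have [L1 [L2 [L3 [L4 [[mL1 L1p hL1] [mL2 L2p hL2] [mL3 L3p hL3] [mL4 L4p hL4] hC1]]]]] := CAR th ps.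
have [M1 [M2 [M3 [M4 [[mM1 M1p hM1] [mM2 M2p hM2] [mM3 M3p hM3] [mM4 M4p hM4] hC2]]]]] := CAR theta0 ps.
case: hLO => mLO LOp hLO. case: hLXr => mLXr LXrp hLXr.
have margX : forall A, <<s genX >> A -> P theta0 ps A = P theta0 psi0 A.
  by move=> A hA; exact: marg.
have margXr : forall A, <<s genXr >> A -> P theta0 ps A = P theta0 psi0 A.
  by move=> A /hSXrX; exact: marg.
have aeM2 : {ae P theta0 psi0, forall w, M2 w = 1}.
  by apply: (LR_one hgX margX); split.
have aeM4 : {ae P theta0 psi0, forall w, M4 w = 1}.
  by apply: (LR_one hgXrm margXr); split.
have aeL2 : {ae P theta0 psi0, forall w, L2 w != 0}.
  apply: (@LR_pos _ _ _ _ hgX (P th ps)); last by split.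
  exact: eqv.
have aeL4 : {ae P theta0 psi0, forall w, L4 w != 0}.
  apply: (@LR_pos _ _ _ _ hgXrm (P th ps)); last by split.
  exact: eqv.
have aeL4X : {ae P theta0 psi0, forall w, L4 w = LXr w}.
  have fin : (\int[P theta0 psi0]_(x in setT) (L4 x)%:E < +oo)%E.
    by rewrite -hL4; [exact: prob_lty | exact: (@sigmaT _ _ genXr)].
  have h := @LR_unique_on d Omega R genXr hgXrm (P theta0 psi0) setT L4 LXr
    (@sigmaT _ _ genXr) mL4 mLXr L4p LXrp fin.
  apply: ae_mp; first apply: h.
  - move=> A hA _; rewrite -hL4// hLXr//.
    exact: (LR_indep hgXrm margXr).
  - by move=> x; apply.
have fiL2 : (\int[P theta0 ps]_x (L2 x)%:E < +oo)%E.
  rewrite (LR_indep hgX margX mL2 L2p (@sigmaT _ _ genX)) -hL2.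
    exact: prob_lty.
  exact: (@sigmaT _ _ genX).
have mL2m : measurable_fun setT L2 := Gm_meas hgX mL2.
have KEY : forall A, measurable A -> P th ps A = dens mL2m L2p fiL2 A.
  pose Gp := [set C | exists2 A, SX A & exists2 B, SR B & C = A `&` B].
  have mG : @measurable d Omega = <<s Gp >>.
    rewrite hF; apply/seteqP; split; apply: sigma_mono.
    - move=> A [hA|hA]; apply: sub_sigma_algebra.
        by exists A => //; exists setT; [exact: sigmaT|rewrite setIT].
      by exists setT; [exact: sigmaT|exists A => //; rewrite setTI].
    - move=> C [A hA [B hB ->]]; apply: sigmaI; apply: sub_sigma_algebra; [left|right] => //.
  have setIG : setI_closed Gp.
    move=> C C' [A hA [B hB ->]] [A' hA' [B' hB' ->]].
    exists (A `&` A'); first exact: sigmaI.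
    exists (B `&` B'); first exact: sigmaI.
    by rewrite setIACA.
  have Gg : forall i : nat, Gp ((fun _ => setT) i).
    by move=> _; exists setT; [exact: sigmaT|exists setT; [exact: sigmaT|rewrite setIT]].
  have gcov : \bigcup_k (fun _ : nat => @setT Omega) k = setT.
    by rewrite bigcup_const//; exists 0%N.
  move=> A mA.
  apply: (@measure_unique d R Omega Gp (fun _ => setT) mG setIG Gg gcov (P th ps)
    (dens mL2m L2p fiL2)) => //; last by move=> k; exact: prob_lty.
  move=> C [A' hA' [B hB ->]].
  have [g1 [g2 [[mg1 g1p hg1] [mg2 g2p hg2] hae]]] := NI th theta0 ps B hB.
  have mA' : measurable A' := hSX _ hA'.
  have mB : measurable B := hSR _ hB.
  transitivity (\int[P th ps]_(w in A') (g1 w)%:E)%E.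
    by rewrite setIC; exact: hg1.
  rewrite (LR_change hgX mL2 L2p hL2 mg1 g1p hA').
  rewrite -(LR_indep hgX margX (Gm_mul mg1 mL2) (fun x => mulr_ge0 (g1p x) (L2p x)) hA').
  transitivity (\int[P theta0 ps]_(x in A') (L2 x * g2 x)%:E)%E.
    apply: ae_eq_integral => //.
    - apply/measurable_EFinP; apply: measurable_funTS; apply: (Gm_meas hgX).
      exact: Gm_mul.
    - apply/measurable_EFinP; apply: measurable_funTS; apply: (Gm_meas hgX).
      exact: Gm_mul.
    - have := ae_transfer (mu := P theta0 ps) (nu := P theta0 psi0)
        (fun N mN => eqv _ _ _ _ N mN) hae.
      by move=> h; apply: ae_mp h _ => x -> _; rewrite mulrC.
  have mI : measurable_fun setT (\1_B : Omega -> R) by exact: measurable_indic.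
  have I0 : forall x, 0 <= (\1_B x : R) by move=> x; rewrite indicE ler0n.
  have fiI : (\int[P theta0 ps]_x (\1_B x : R)%:E < +oo)%E.
    by rewrite integral_indic// setIT; exact: prob_lty.
  have hdens : forall C0, <<s genX >> C0 ->
      dens mI I0 fiI C0 = (\int[P theta0 ps]_(x in C0) (g2 x)%:E)%E.
    by move=> C0 hC; rewrite /dens integral_indic//; [exact: hg2|exact: hSX].
  rewrite -(LR_change hgX mg2 g2p hdens mL2 L2p hA').
  rewrite dens_change//.
  symmetry; change (\int[P theta0 ps]_(x in A' `&` B) (L2 x)%:E =
    \int[P theta0 ps]_(x in A') (L2 x * \1_B x)%:E)%E.
  rewrite integral_mkcondr; apply: eq_integral => x _.
  by rewrite /patch indicE; case: (x \in B); rewrite ?mulr1 ?mulr0.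
have mL2F : G_measurable <<s GF >> L2.
  by apply: (Gm_mono _ mL2) => A hA; apply: sub_sigma_algebra; left.
have aeA : {ae P theta0 psi0, forall w, L1 w = L2 w * M1 w}.
  have fin : (\int[P theta0 psi0]_(x in setT) (L1 x)%:E < +oo)%E.
    by rewrite -hL1; [exact: prob_lty | exact: (@sigmaT _ _ GF)].
  have h := @LR_unique_on d Omega R GF hGF (P theta0 psi0) setT L1 (fun w => L2 w * M1 w)
    (@sigmaT _ _ GF) mL1 (Gm_mul mL2F mM1) L1p (fun x => mulr_ge0 (L2p x) (M1p x)) fin.
  apply: ae_mp; first apply: h.
  - move=> A hA _; rewrite -hL1// KEY; last exact/hmF.
    exact: (LR_change hGF mM1 M1p hM1 mL2F L2p hA).
  - by move=> x; apply.
have aeE : {ae P theta0 psi0, forall w, E w -> L3 w = L4 w * M3 w}.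
  have h := ae_and (ae_and (ae_and hC1 hC2) (ae_and aeM2 aeM4))
    (ae_and aeA (ae_and aeL2 aeL4)).
  apply: ae_mp; first exact: h.
  move=> w [[[h1 h2] [e2 e4]] [eA [n2 n4]]] Ew.
  have := h2 Ew; rewrite e2 e4 !divr1 => e13.
  have := h1 Ew; rewrite eA mulrAC divff// mul1r e13 => e.
  by rewrite e mulrC divfK.
have mL4O : G_measurable SO (fun w => L4 w * \1_E w).
  move=> B mB.
  have hL4E : SO (L4 @^-1` B `&` E) by apply: T2; exact: mL4.
  have [B0|nB0] := pselect (B 0).
    have -> : (fun w => L4 w * \1_E w) @^-1` B = (L4 @^-1` B `&` E) `|` ~` E.
      apply/seteqP; split => w /=; rewrite indicE;
        (have [Ew|nEw] := pselect (E w); [rewrite mem_set// mulr1|rewrite memNset// mulr0]).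
      - by move=> h; left.
      - by move=> h; right.
      - by case=> [[]|].
      - by move=> _.
    apply: (@measurableU _ (g_sigma_algebraType genO)) => //.
    exact: (@measurableC _ (g_sigma_algebraType genO)).
  have -> : (fun w => L4 w * \1_E w) @^-1` B = L4 @^-1` B `&` E.
    apply/seteqP; split => w /=; rewrite indicE;
      (have [Ew|nEw] := pselect (E w); [rewrite mem_set// mulr1|rewrite memNset// mulr0]).
    - by move=> h.
    - by move=> h.
    - by case.
    - by case.
  exact: hL4E.
have mL4J : G_measurable <<s GJ >> L4.
  by apply: (Gm_mono _ mL4) => A hA; apply: sub_sigma_algebra; left.
have finO : (\int[P theta0 ps]_(x in E) (LO x)%:E < +oo)%E.
  by rewrite -hLO//; exact: prob_lty.
have I0 : forall w, 0 <= L4 w * \1_E w.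
  by move=> w; rewrite mulr_ge0// indicE ler0n.
have hO := @LR_unique_on d Omega R genO hgO (P theta0 ps) E LO (fun w => L4 w * \1_E w)
  hEO mLO mL4O LOp I0 finO.
have aeO : {ae P theta0 ps, forall w, E w -> LO w = L4 w * \1_E w}.
  apply: hO => A hA AE.
  rewrite -hLO//.
  have AEA : A `&` E = A by apply/setIidPl.
  have hAJ : <<s GJ >> A by rewrite -AEA; exact: T1.
  have mA : measurable A := sGm hGJ hAJ.
  rewrite hL3//.
  transitivity (\int[P theta0 psi0]_(x in A) (L4 x * M3 x)%:E)%E.
    apply: ae_eq_integral => //.
    - apply/measurable_EFinP; apply: measurable_funTS; exact: (Gm_meas hGJ).
    - apply/measurable_EFinP; apply: measurable_funTS; apply: (Gm_meas hGJ).
      exact: Gm_mul.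
    - by apply: ae_mp; first exact: aeE; move=> w h Aw; rewrite h//; exact: AE.
  rewrite -(LR_change hGJ mM3 M3p hM3 mL4J L4p hAJ).
  apply: eq_integral => x /[!inE] Ax.
  by rewrite indicE mem_set ?mulr1//; exact: AE.
have aeO0 := ae_transfer (mu := P theta0 psi0) (nu := P theta0 ps)
  (fun N mN => eqv _ _ _ _ N mN) aeO.
rewrite /ae_on.
apply: ae_mp; first exact: (ae_and aeO0 aeL4X).
move=> w [h1 h2] Ew.
by rewrite h1// indicE mem_set// mulr1.
Qed.
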